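(* Let $\{\tau_k\}$ be the merit parameter sequence generated by Algorithm 1 or Algorithm 2 (described in the context) under the Standing Assumption and Matrix Assumption of the context, and suppose the algorithm does not terminate finitely. Then there exist $k_\tau\in\mathbb{N}$ and $\tau_{\min}>0$ such that $\tau_k=\tau_{\min}$ for all $k\ge k_\tau$.
   Context: Notation: $g_k=\nabla f(x_k)$, $c_k=c(x_k)$, $J_k=\nabla c(x_k)^T$; $\phi(x,\tau)=\tau f(x)+\|c(x)\|_1$; $\Delta q(x,\tau,g,H,d)=-\tau(g^Td+\frac12\max\{d^THd,0\})+\|c(x)\|_1$. Matrix Assumption: symmetric $H_k$ with $\|H_k\|_2\le\kappa_H$ and $u^TH_ku\ge\zeta\|u\|_2^2$ whenever $J_ku=0$. Common iteration: $(d_k,y_k)$ solves $H_kd_k+J_k^Ty_k=-g_k$, $J_kd_k=-c_k$; stop if $g_k+J_k^Ty_k=0$ and $c_k=0$. $\tau_k^{trial}=\infty$ if $g_k^Td_k+\max\{d_k^TH_kd_k,0\}\le0$, else $\frac{(1-\sigma)\|c_k\|_1}{g_k^Td_k+\max\{d_k^TH_kd_k,0\}}$; $\tau_k=\tau_{k-1}$ if $\tau_{k-1}\le\tau_k^{trial}$, else $(1-\epsilon)\tau_k^{trial}$ (with $\tau_{-1}>0$, $\epsilon,\sigma\in(0,1)$); $x_{k+1}=x_k+\alpha_kd_k$. (SD) for trial $\alpha$: $\phi(x_k+\alpha d_k,\tau_k)\le\phi(x_k,\tau_k)-\eta\alpha\Delta q(x_k,\tau_k,g_k,H_k,d_k)$,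 $\eta\in(0,1)$. Algorithm 1 (inputs also $\rho>1$, $L_{-1}>0$, $\gamma_{-1,i}>0$): choose $L_{k,0}\in(0,L_{k-1}]$, $\gamma_{k,i,0}\in(0,\gamma_{k-1,i}]$; for $j=0,1,\dots$ with $\Lambda_{k,j}=\tau_kL_{k,j}+\sum_i\gamma_{k,i,j}$: $\widehat\alpha_{k,j}=\frac{2(1-\eta)\Delta q(x_k,\tau_k,g_k,H_k,d_k)}{\Lambda_{k,j}\|d_k\|_2^2}$, $\widetilde\alpha_{k,j}=\widehat\alpha_{k,j}-\frac{4\|c_k\|_1}{\Lambda_{k,j}\|d_k\|_2^2}$; $\alpha_{k,j}=\widehat\alpha_{k,j}$ if $\widehat\alpha_{k,j}<1$, $1$ if $\widetilde\alpha_{k,j}\le1\le\widehat\alpha_{k,j}$, $\widetilde\alpha_{k,j}$ if $\widetilde\alpha_{k,j}>1$; accept ($\alpha_k=\alpha_{k,j}$, $L_k=L_{k,j}$, $\gamma_{k,i}=\gamma_{k,i,j}$) if (SD) holds or if both $f(x_k+\alpha_{k,j}d_k)\le f(x_k)+\alpha_{k,j}g_k^Td_k+\frac12L_{k,j}\alpha_{k,j}^2\|d_k\|_2^2$ (LF) and $|c_i(x_k+\alpha_{k,j}d_k)|\le|c_i(x_k)+\alpha_{k,j}\nabla c_i(x_k)^Td_k|+\frac12\gamma_{k,i,j}\alpha_{k,j}^2\|d_k\|_2^2$ (LC$_i$) for all $i$; otherwise multiply $L_{k,j}$ by $\rho$ if (LF) fails and $\gamma_{k,i,j}$ by $\rho$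 if (LC$_i$) fails. Algorithm 2 (inputs also $\nu\in(0,1)$, $\alpha>0$): $\alpha_k=\nu^j\alpha$ for the smallest $j\ge0$ such that (SD) holds. Standing Assumption: an open convex set $\mathcal X$ contains all iterates and trial points $x_k+\alpha_{k,j}d_k$; $f$ is $C^1$, bounded below on $\mathcal X$, $\nabla f$ bounded and $L$-Lipschitz on $\mathcal X$; $c$, $\nabla c^T$ bounded on $\mathcal X$; $\nabla c_i$ is $\gamma_i$-Lipschitz on $\mathcal X$; singular values of $\nabla c(x)^T$ bounded away from zero uniformly over $\mathcal X$. *)

(* Defs.v *)
From HB Require Import structures.
From mathcomp Require Import all_boot all_order all_algebra.
From mathcomp Require Import all_classical all_reals all_analysis.
Set Implicit Arguments. Unset Strict Implicit. Unset Printing Implicit Defensive.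
Import Order.TTheory GRing.Theory Num.Theory.
Import numFieldNormedType.Exports.
Local Open Scope classical_set_scope.
Local Open Scope ring_scope.

Section Defs.
Variable R : realType.

Definition dotv (n : nat) (u v : 'cV[R]_n) : R := \sum_(i < n) u i 0 * v i 0.
Definition norm2 (n : nat) (u : 'cV[R]_n) : R := Num.sqrt (\sum_(i < n) u i 0 ^+ 2).
Definition norm1 (n : nat) (u : 'cV[R]_n) : R := \sum_(i < n) `|u i 0|.

(* The i-th row of J, seen as a column vector (the gradient of c_i). *)
Definition rowv (m n : nat) (J : 'M[R]_(m, n)) (i : 'I_m) : 'cV[R]_n := (row i J)^T.

Definition convex_set_cV (n : nat) (X : set 'cV[R]_n) : Prop :=
  forall u v t, X u -> X v -> 0 <= t <= 1 -> X ((1 - t) *: u + t *: v).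

Definition singular_value (m n : nat) (J : 'M[R]_(m, n)) (s : R) : Prop :=
  0 <= s /\ eigenvalue (J *m J^T) (s ^+ 2).

Definition spec_norm_le (n : nat) (H : 'M[R]_n) (k : R) : Prop :=
  forall u : 'cV[R]_n, norm2 (H *m u) <= k * norm2 u.

Definition phi (n m : nat) (f : 'cV[R]_n -> R) (c : 'cV[R]_n -> 'cV[R]_m)
  (x : 'cV[R]_n) (tau : R) : R := tau * f x + norm1 (c x).

Definition dq (n m : nat) (cx : 'cV[R]_m) (tau : R) (g : 'cV[R]_n)
  (H : 'M[R]_n) (d : 'cV[R]_n) : R :=
  - tau * (dotv g d + 2^-1 * Num.max (dotv d (H *m d)) 0) + norm1 cx.

(* merit parameter update: tau_k from tau_{k-1};
   tau_trial = +oo when g'd + max(d'Hd,0) <= 0 *)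
Definition tau_update (eps sigma taup : R) (q : R) (c1 : R) : R :=
  if q <= 0 then taup
  else let tr := (1 - sigma) * c1 / q in
       if taup <= tr then taup else (1 - eps) * tr.

Definition SD (n m : nat) (f : 'cV[R]_n -> R) (c : 'cV[R]_n -> 'cV[R]_m)
  (eta tau a : R) (x g d : 'cV[R]_n) (H : 'M[R]_n) : bool :=
  phi f c (x + a *: d) tau <= phi f c x tau - eta * a * dq (c x) tau g H d.

Definition LFcond (n : nat) (f : 'cV[R]_n -> R) (L a : R) (x g d : 'cV[R]_n) : bool :=
  f (x + a *: d) <= f x + a * dotv g d + 2^-1 * L * a ^+ 2 * norm2 d ^+ 2.

Definition LCcond (n m : nat) (c : 'cV[R]_n -> 'cV[R]_m) (J : 'M[R]_(m, n))
  (i : 'I_m) (gi a : R) (x d : 'cV[R]_n) : bool :=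
  `|c (x + a *: d) i 0| <= `|c x i 0 + a * dotv (rowv J i) d|
                            + 2^-1 * gi * a ^+ 2 * norm2 d ^+ 2.

Definition alpha1 (n m : nat) (eta Lam : R) (cx : 'cV[R]_m) (tau : R)
  (g : 'cV[R]_n) (H : 'M[R]_n) (d : 'cV[R]_n) : R :=
  let ahat := 2 * (1 - eta) * dq cx tau g H d / (Lam * norm2 d ^+ 2) in
  let atil := ahat - 4 * norm1 cx / (Lam * norm2 d ^+ 2) in
  if ahat < 1 then ahat else if atil <= 1 then 1 else atil.

(* L k, gam k i are
   L_k, gamma_{k,i}; Lkj k j, gkj k j i are L_{k,j}, gamma_{k,i,j}; jk k is
   the accepted inner index.  Trial points are required to lie in X
   (Standing Assumption). *)
Definition alg1_stepsizes (n m : nat) (X : set 'cV[R]_n)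
  (f : 'cV[R]_n -> R) (gf : 'cV[R]_n -> 'cV[R]_n)
  (c : 'cV[R]_n -> 'cV[R]_m) (Jc : 'cV[R]_n -> 'M[R]_(m, n))
  (eta rho Lm1 : R) (gm1 : 'I_m -> R)
  (x : nat -> 'cV[R]_n) (H : nat -> 'M[R]_n) (d : nat -> 'cV[R]_n)
  (tau alpha : nat -> R) : Prop :=
  1 < rho /\ 0 < Lm1 /\ (forall i, 0 < gm1 i) /\
  exists (L : nat -> R) (gam : nat -> 'I_m -> R)
         (Lkj : nat -> nat -> R) (gkj : nat -> nat -> 'I_m -> R) (jk : nat -> nat),
  forall k : nat,
    let Lprev := if k is k'.+1 then L k' else Lm1 in
    let gprev i := if k is k'.+1 then gam k' i else gm1 i in
    let akj j := alpha1 eta (tau k * Lkj k j + \sum_(i < m) gkj k j i)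
                        (c (x k)) (tau k) (gf (x k)) (H k) (d k) in
    let LF j := LFcond f (Lkj k j) (akj j) (x k) (gf (x k)) (d k) in
    let LC j i := LCcond c (Jc (x k)) i (gkj k j i) (akj j) (x k) (d k) in
    let acc j := SD f c eta (tau k) (akj j) (x k) (gf (x k)) (d k) (H k)
                 || (LF j && [forall i, LC j i]) in
    (0 < Lkj k 0 <= Lprev) /\
    (forall i, 0 < gkj k 0 i <= gprev i) /\
    [/\ (forall j, (j < jk k)%N ->
           ~~ acc j /\
           Lkj k j.+1 = (if LF j then Lkj k j else rho * Lkj k j) /\
           (forall i, gkj k j.+1 i = (if LC j i then gkj k j i else rho * gkj k j i))),
        acc (jk k),
        [/\ alpha k = akj (jk k), L k = Lkj k (jk k) &
            forall i, gam k i = gkj k (jk k) i] &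
        (forall j, (j <= jk k)%N -> X (x k + akj j *: d k))].

Definition alg2_stepsizes (n m : nat) (X : set 'cV[R]_n)
  (f : 'cV[R]_n -> R) (gf : 'cV[R]_n -> 'cV[R]_n)
  (c : 'cV[R]_n -> 'cV[R]_m)
  (eta nu abar : R)
  (x : nat -> 'cV[R]_n) (H : nat -> 'M[R]_n) (d : nat -> 'cV[R]_n)
  (tau alpha : nat -> R) : Prop :=
  0 < nu < 1 /\ 0 < abar /\
  forall k : nat, exists jk : nat,
    let SDj j := SD f c eta (tau k) (nu ^+ j * abar) (x k) (gf (x k)) (d k) (H k) in
    [/\ alpha k = nu ^+ jk * abar, SDj jk,
        (forall j, (j < jk)%N -> ~~ SDj j) &
        (forall j, (j <= jk)%N -> X (x k + (nu ^+ j * abar) *: d k))].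

End Defs.

(* Main.v *)
Require Import Defs.
From HB Require Import structures.
From mathcomp Require Import all_boot all_order all_algebra.
From mathcomp Require Import all_classical all_reals all_analysis.
From mathcomp Require Import ring lra.
Import Order.TTheory GRing.Theory Num.Theory.
Import numFieldNormedType.Exports.
Local Open Scope classical_set_scope.
Local Open Scope ring_scope.
Set Implicit Arguments. Unset Strict Implicit. Unset Printing Implicit Defensive.

Section S1.
Variable R : realType.

Definition QM m (M : 'M[R]_m) (a b : 'rV[R]_m) : R := (a *m M *m b^T) 0 0.

Lemma QM_sym m (M : 'M[R]_m) a b : M^T = M -> QM M a b = QM M b a.
Proof.
move=> hM; rewrite /QM.
have -> : (a *m M *m b^T) 0 0 = ((a *m M *m b^T)^T) 0 0 by rewrite [RHS]mxE.
by rewrite !trmx_mul trmxK hM mulmxA.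
Qed.

Lemma QM_expand m (M : 'M[R]_m) a b t : M^T = M ->
  QM M (a + t *: b) (a + t *: b) = QM M a a + 2 * t * QM M a b + t ^+ 2 * QM M b b.
Proof.
move=> hM; rewrite /QM linearD /= linearZ /= !mulmxDl !mulmxDr.
rewrite -!scalemxAl -!scalemxAr !mxE.
have h := QM_sym a b hM; rewrite /QM !mxE in h; rewrite -h.
ring.
Qed.

Lemma QM1 m (a : 'rV[R]_m) : QM 1%:M a a = \sum_i a 0 i ^+ 2.
Proof.
rewrite /QM mulmx1 mxE; apply: eq_bigr => i _; rewrite !mxE expr2 //.
Qed.


Lemma QM0 m (M : 'M[R]_m) b : QM M 0 b = 0.
Proof. by rewrite /QM !mul0mx mxE. Qed.

Lemma QMZ m (M : 'M[R]_m) a k : M^T = M -> QM M (k *: a) (k *: a) = k ^+ 2 * QM M a a.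
Proof.
move=> hM; have := QM_expand 0 a k hM; rewrite add0r => ->.
by rewrite !QM0 mulr0 !add0r.
Qed.

Lemma QME m (M : 'M[R]_m) a : QM M a a = \sum_j (\sum_i a 0 i * M i j) * a 0 j.
Proof.
rewrite /QM mxE; apply: eq_bigr => j _; rewrite !mxE.
by congr (_ * _).
Qed.

Lemma cont_sum (T : topologicalType) (I : Type) (r : seq I) (F : I -> T -> R) :
  (forall i, continuous (F i)) -> continuous (fun x => \sum_(i <- r) F i x).
Proof.
move=> hF; elim: r => [|a r IH].
  under eq_fun do rewrite big_nil.
  exact: cst_continuous.
under eq_fun do rewrite big_cons.
by move=> x; apply: continuousD; [exact: hF | exact: IH].
Qed.

Lemma QM_cont m (M : 'M[R]_m) : continuous (fun a : 'rV[R]_m => QM M a a).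
Proof.
under eq_fun do rewrite QME.
apply: cont_sum => j x; apply: continuousM; last exact: coord_continuous.
apply: cont_sum => i y; apply: continuousM; first exact: coord_continuous.
exact: cst_continuous.
Qed.

Lemma QM1E m (a : 'rV[R]_m) : QM 1%:M a a = \sum_i a 0 i ^+ 2.
Proof. exact: QM1. Qed.

Lemma QM1_ge0 m (a : 'rV[R]_m) : 0 <= QM 1%:M a a.
Proof. by rewrite QM1E; apply: sumr_ge0 => i _; exact: sqr_ge0. Qed.

Lemma QM1_eq0 m (a : 'rV[R]_m) : QM 1%:M a a = 0 -> a = 0.
Proof.
rewrite QM1E => /eqP; rewrite psumr_eq0; last by move=> i _; exact: sqr_ge0.
move=> /allP h; apply/rowP => i; rewrite mxE.
have := h i (mem_index_enum _); rewrite /= sqrf_eq0 => /eqP.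
by rewrite (_ : (0 : 'I_1) = ord0) //; apply: val_inj.
Qed.

Lemma QMJ m n (J : 'M[R]_(m, n)) a : QM (J *m J^T) a a = QM 1%:M (a *m J) (a *m J).
Proof. rewrite /QM mulmx1 trmx_mul !mulmxA; reflexivity. Qed.

Lemma quad0 (a b : R) : (forall t, 0 <= t * a + t ^+ 2 * b) -> a = 0.
Proof.
move=> h; apply/eqP; apply/negP => /negP ha.
set c := `|b| + 1.
have hc : 0 < c by rewrite /c ltr_pwDr // normr_ge0.
set t := - a / (2 * c).
have h1 : t * a + t ^+ 2 * b <= t * a + t ^+ 2 * c.
  by rewrite lerD2l ler_wpM2l ?sqr_ge0 // /c (le_trans (ler_norm b)) // lerDl.
have h2 : t * a + t ^+ 2 * c = - (a ^+ 2 / (4 * c)).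
  rewrite /t; field; apply/eqP; lra.
have h3 : 0 < a ^+ 2 / (4 * c).
  by apply: divr_gt0; [rewrite exprn_even_gt0 | lra].
have := h t; lra.
Qed.


Lemma colE00 m (u : 'rV[R]_m) j : (u *m (delta_mx (0 : 'I_1) j)^T) 0 0 = u 0 j.
Proof. by rewrite trmx_delta -colE mxE. Qed.

Lemma sv_bound m n (J : 'M[R]_(m, n)) s0 :
  (forall s, singular_value J s -> s0 <= s) -> 0 < s0 ->
  forall v : 'rV[R]_m, s0 ^+ 2 * QM 1%:M v v <= QM (J *m J^T) v v.
Proof.
move=> hsv hs0 v.
set A := J *m J^T.
have hA : A^T = A by rewrite /A trmx_mul trmxK.
have h1 : (1%:M : 'M[R]_m)^T = 1%:M by rewrite trmx1.
have QA0 : forall a, 0 <= QM A a a by move=> a; rewrite /A QMJ QM1_ge0.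
have [/QM1_eq0 -> | nz] := eqVneq (QM 1%:M v v) 0.
  by rewrite QM0 mulr0 QM0.
set S := [set a : 'rV[R]_m | QM 1%:M a a = 1].
have Snorm : forall a, QM 1%:M a a != 0 ->
    S ((Num.sqrt (QM 1%:M a a))^-1 *: a) /\ ((Num.sqrt (QM 1%:M a a))^-1) ^+ 2 * QM 1%:M a a = 1.
  move=> a na; have ge := QM1_ge0 a.
  have e : ((Num.sqrt (QM 1%:M a a))^-1) ^+ 2 * QM 1%:M a a = 1.
    by rewrite exprVn sqr_sqrtr // mulVf.
  by split => //; rewrite /S /= QMZ.
have S0 : S !=set0 by exists ((Num.sqrt (QM 1%:M v v))^-1 *: v); case: (Snorm v nz).
have cS : compact S.
  apply: (subclosed_compact _ (rV_compact (fun _ => @segment_compact R (-1) 1))).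
    have := proj1 (continuous_closedP (fun a : 'rV[R]_m => QM 1%:M a a)) (@QM_cont m 1%:M).
    move=> /(_ [set x | x = 1] (@closed_eq R 1)); exact.
  move=> a Sa i /=; rewrite in_itv /=.
  have : (a ord0 i) ^+ 2 <= 1.
    rewrite -Sa QM1E (bigD1 i) //= lerDl.
    by apply: sumr_ge0 => k _; exact: sqr_ge0.
  move: (a ord0 i) => x hh; apply/andP; split; nra.
have [w0 /set_mem Sw0 hmin] := compact_EVT_min S0 cS (continuous_subspaceT (@QM_cont _ A)).
set lam := QM A w0 w0.
have c1 : forall a, lam * QM 1%:M a a <= QM A a a.
  move=> a; have [/QM1_eq0 -> | na] := eqVneq (QM 1%:M a a) 0.
    by rewrite QM0 mulr0 QM0.
  have [Sa e] := Snorm a na.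
  have := hmin _ (mem_set Sa); rewrite QMZ // -/lam => hl.
  have := ler_wpM2r (QM1_ge0 a) hl.
  by rewrite mulrAC e mul1r.
have c2 : w0 *m A = lam *: w0.
  apply/rowP => j.
  have q : forall t : R, 0 <= t * (2 * (QM A w0 (delta_mx 0 j) - lam * QM 1%:M w0 (delta_mx 0 j)))
       + t ^+ 2 * (QM A (delta_mx 0 j) (delta_mx 0 j) - lam * QM 1%:M (delta_mx 0 j) (delta_mx 0 j)).
    move=> t; have := c1 (w0 + t *: delta_mx 0 j).
    rewrite !QM_expand // Sw0 -/lam => hh; lra.
  have := quad0 q; rewrite /QM mulmx1 !colE00 => /eqP.
  rewrite mulf_eq0 pnatr_eq0 /= subr_eq0 => /eqP ->; by rewrite [RHS]mxE.
have lam0 : 0 <= lam by exact: QA0.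
have ev : singular_value J (Num.sqrt lam).
  split; first exact: sqrtr_ge0.
  rewrite sqr_sqrtr //; apply/eigenvalueP; exists w0; first exact: c2.
  by apply/negP => /eqP w00; move: Sw0; rewrite /S /= w00 QM0 => /eqP; rewrite eq_sym oner_eq0.
have hs := hsv _ ev.
have : s0 ^+ 2 <= lam.
  rewrite -(sqr_sqrtr lam0); rewrite ler_pXn2r // ?nnegrE ?sqrtr_ge0 //; exact: ltW.
move=> hl; apply: le_trans (c1 v); apply: ler_wpM2r => //; exact: QM1_ge0.
Qed.

End S1.

Section S2.
Variable R : realType.
Implicit Types (n : nat).

Lemma dotvE n (u v : 'cV[R]_n) : dotv u v = (u^T *m v) 0 0.
Proof. by rewrite /dotv mxE; apply: eq_bigr => i _; rewrite mxE. Qed.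

Lemma dotvC n (u v : 'cV[R]_n) : dotv u v = dotv v u.
Proof. by rewrite /dotv; apply: eq_bigr => i _; rewrite mulrC. Qed.

Lemma dotvDl n (u w v : 'cV[R]_n) : dotv (u + w) v = dotv u v + dotv w v.
Proof. by rewrite /dotv -big_split; apply: eq_bigr => i _; rewrite mxE mulrDl. Qed.

Lemma dotvDr n (u w v : 'cV[R]_n) : dotv v (u + w) = dotv v u + dotv v w.
Proof. by rewrite dotvC dotvDl !(dotvC v). Qed.

Lemma dotvZl n k (u v : 'cV[R]_n) : dotv (k *: u) v = k * dotv u v.
Proof. by rewrite /dotv mulr_sumr; apply: eq_bigr => i _; rewrite mxE mulrA. Qed.

Lemma dotvZr n k (u v : 'cV[R]_n) : dotv v (k *: u) = k * dotv v u.
Proof. by rewrite dotvC dotvZl dotvC. Qed.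

Lemma dotvNl n (u v : 'cV[R]_n) : dotv (- u) v = - dotv u v.
Proof. by rewrite -scaleN1r dotvZl mulN1r. Qed.

Lemma dotvNr n (u v : 'cV[R]_n) : dotv v (- u) = - dotv v u.
Proof. by rewrite dotvC dotvNl dotvC. Qed.

Lemma dotvBl n (u w v : 'cV[R]_n) : dotv (u - w) v = dotv u v - dotv w v.
Proof. by rewrite dotvDl dotvNl. Qed.

Lemma dotvBr n (u w v : 'cV[R]_n) : dotv v (u - w) = dotv v u - dotv v w.
Proof. by rewrite dotvDr dotvNr. Qed.

Lemma dotv0l n (v : 'cV[R]_n) : dotv 0 v = 0.
Proof. by rewrite /dotv big1 // => i _; rewrite mxE mul0r. Qed.

Lemma dotv_tr m n (A : 'M[R]_(m, n)) y d : dotv (A^T *m y) d = dotv y (A *m d).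
Proof. by rewrite !dotvE trmx_mul trmxK mulmxA. Qed.

Lemma dotv_ge0 n (u : 'cV[R]_n) : 0 <= dotv u u.
Proof. by apply: sumr_ge0 => i _; rewrite -expr2 sqr_ge0. Qed.

Lemma dotv_eq0 n (u : 'cV[R]_n) : dotv u u = 0 -> u = 0.
Proof.
move=> /eqP; rewrite /dotv psumr_eq0; last by move=> i _; rewrite -expr2 sqr_ge0.
move=> /allP h; apply/colP => i; rewrite mxE.
have := h i (mem_index_enum _); rewrite /= -expr2 sqrf_eq0 => /eqP.
by rewrite (_ : (0 : 'I_1) = ord0) //; apply: val_inj.
Qed.

Lemma norm2_dot n (u : 'cV[R]_n) : norm2 u = Num.sqrt (dotv u u).
Proof. by rewrite /norm2 /dotv; congr Num.sqrt; apply: eq_bigr => i _; rewrite expr2. Qed.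

Lemma norm2_ge0 n (u : 'cV[R]_n) : 0 <= norm2 u.
Proof. by rewrite norm2_dot sqrtr_ge0. Qed.

Lemma norm2_sq n (u : 'cV[R]_n) : norm2 u ^+ 2 = dotv u u.
Proof. by rewrite norm2_dot sqr_sqrtr // dotv_ge0. Qed.

Lemma norm2N n (u : 'cV[R]_n) : norm2 (- u) = norm2 u.
Proof. by rewrite !norm2_dot dotvNl dotvNr opprK. Qed.

Lemma CS n (u v : 'cV[R]_n) : dotv u v <= norm2 u * norm2 v.
Proof.
have [a0|a0] := eqVneq (norm2 u) 0.
  have : dotv u u = 0 by rewrite -norm2_sq a0 expr0n.
  by move/dotv_eq0 => ->; rewrite dotv0l mulr_ge0 // norm2_ge0.
have [b0|b0] := eqVneq (norm2 v) 0.
  have : dotv v v = 0 by rewrite -norm2_sq b0 expr0n.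
  by move/dotv_eq0 => ->; rewrite dotvC dotv0l mulr_ge0 // norm2_ge0.
set a := norm2 u; set b := norm2 v.
have ha : 0 < a by rewrite lt0r a0 norm2_ge0.
have hb : 0 < b by rewrite lt0r b0 norm2_ge0.
have h := dotv_ge0 (b *: u - a *: v).
rewrite !(dotvBl, dotvBr, dotvZl, dotvZr) -!norm2_sq -/a -/b (dotvC v u) in h.
have hab : 0 < a * b by exact: mulr_gt0.
have : (a * b) * dotv u v <= (a * b) * (a * b) by nra.
by rewrite ler_pM2l.
Qed.

Lemma sumsq_le (I : Type) (r : seq I) (F : I -> R) : (forall i, 0 <= F i) ->
  \sum_(i <- r) F i ^+ 2 <= (\sum_(i <- r) F i) ^+ 2.
Proof.
move=> hF; elim: r => [|a r IH]; first by rewrite !big_nil expr0n.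
rewrite !big_cons.
have : 0 <= \sum_(i <- r) F i by apply: sumr_ge0.
have := hF a; nra.
Qed.

Lemma norm2_le1 n (u : 'cV[R]_n) : norm2 u <= norm1 u.
Proof.
rewrite /norm2 /norm1.
have h1 : 0 <= \sum_(i < n) `|u i 0| by apply: sumr_ge0.
rewrite -(ger0_norm h1) -sqrtr_sqr ler_sqrt; last by rewrite sqr_ge0.
under eq_bigr do rewrite -real_normK ?num_real //.
exact: sumsq_le.
Qed.

Lemma spec_sq n (H : 'M[R]_n) k u : 0 <= k -> spec_norm_le H k ->
  norm2 (H *m u) <= k * norm2 u.
Proof. by move=> _ h; exact: h. Qed.

Lemma sv_col m n (J : 'M[R]_(m, n)) s0 :
  (forall s, singular_value J s -> s0 <= s) -> 0 < s0 ->
  forall w : 'cV[R]_m, s0 ^+ 2 * dotv w w <= dotv (J^T *m w) (J^T *m w).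
Proof.
move=> hsv hs0 w; have := sv_bound hsv hs0 (w^T).
rewrite QMJ /QM !mulmx1 !dotvE trmxK.
have e : (J^T *m w)^T = w^T *m J by rewrite trmx_mul !trmxK.
have e2 : (w^T *m J)^T = J^T *m w by rewrite trmx_mul trmxK.
by rewrite e e2.
Qed.


Lemma JJT_unit m n (J : 'M[R]_(m, n)) s0 :
  (forall s, singular_value J s -> s0 <= s) -> 0 < s0 -> J *m J^T \in unitmx.
Proof.
move=> hsv hs0; rewrite -row_free_unit -kermx_eq0; apply/eqP/row_matrixP => i.
rewrite row0; set r := row i (kermx (J *m J^T)).
have hr : r *m (J *m J^T) = 0 by rewrite /r -row_mul mulmx_ker row0.
have := sv_bound hsv hs0 r; rewrite {2}/QM hr mul0mx mxE => h.
apply: QM1_eq0; have := QM1_ge0 r; have : 0 < s0 ^+ 2 by rewrite exprn_gt0.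
move: (QM 1%:M r r) h => q h h1 h2; nra.
Qed.

End S2.

Section S3.
Variable R : realType.

Lemma cancel_sq (a b s : R) : 0 <= a -> 0 <= b -> 0 <= s -> s * a ^+ 2 <= a * b -> s * a <= b.
Proof. move=> ha hb hs h; nra. Qed.

Lemma sq_le (a b : R) : 0 <= a -> 0 <= b -> a ^+ 2 <= b ^+ 2 -> a <= b.
Proof. move=> ha hb h; nra. Qed.

Lemma q_bound m n (J : 'M[R]_(m,n)) (H : 'M[R]_n) (g d : 'cV[R]_n) (y c : 'cV[R]_m)
   s0 kH zeta Bg Bc :
  0 < s0 -> 0 < kH -> 0 < zeta ->
  (forall s, singular_value J s -> s0 <= s) ->
  spec_norm_le H kH ->
  (forall u, J *m u = 0 -> zeta * norm2 u ^+ 2 <= dotv u (H *m u)) ->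
  norm2 g <= Bg -> norm2 c <= Bc ->
  H *m d + J^T *m y = - g -> J *m d = - c ->
  dotv g d + Num.max (dotv d (H *m d)) 0 <=
   ((Bg + kH * ((Bg + kH * (Bc / s0)) / zeta) + kH * (Bc / s0)) / s0
     + (kH ^+ 2 / zeta + kH) * (Bc / s0 ^+ 2)) * norm2 c.
Proof.
move=> hs0 hkH hz hsv hHn hHc hg hc hl1 hl2.
set A := J *m J^T.
have hU : A \in unitmx by exact: JJT_unit hsv hs0.
set z := invmx A *m (- c).
set v := J^T *m z.
set u := d - v.
have hJv : J *m v = - c by rewrite /v mulmxA -/A /z mulmxA mulmxV // mul1mx.
have hJu : J *m u = 0 by rewrite /u mulmxBr hl2 hJv subrr.
have hdu : d = u + v by rewrite /u subrK.
have hHd : H *m d = - g - J^T *m y by rewrite -hl1 addrK.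
have hgd : g = - (H *m d + J^T *m y) by rewrite hl1 opprK.
have nn := @norm2_ge0 R.
have sq := @norm2_sq R.
set nc := norm2 c; set nv := norm2 v; set nu := norm2 u; set nz := norm2 z.
set ng := norm2 g; set ny := norm2 y; set nJy := norm2 (J^T *m y).
have hnc := nn _ c; have hnv := nn _ v; have hnu := nn _ u; have hnz := nn _ z.
have hng := nn _ g; have hny := nn _ y; have hnJy := nn _ (J^T *m y).
have hHv : norm2 (H *m v) <= kH * nv by exact: hHn.
have hHu : norm2 (H *m u) <= kH * nu by exact: hHn.
have hnHv := nn _ (H *m v); have hnHu := nn _ (H *m u).
have F1 : nv ^+ 2 = - dotv z c.
  by rewrite sq {1}/v dotv_tr hJv dotvNr.
have F2 : s0 ^+ 2 * nz ^+ 2 <= nv ^+ 2 by rewrite !sq; exact: sv_col.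
have F3 : - dotv z c <= nz * nc.
  by rewrite -dotvNl; apply: le_trans (CS _ _) _; rewrite norm2N.
have F4 : s0 ^+ 2 * nz <= nc.
  apply: cancel_sq => //; first by rewrite sqr_ge0.
  by apply: le_trans F2 _; rewrite F1.
have hv : s0 * nv <= nc.
  apply: sq_le => //; first by rewrite mulr_ge0 // ltW.
  rewrite exprMn F1.
  have : s0 ^+ 2 * (- dotv z c) <= s0 ^+ 2 * (nz * nc).
    by rewrite ler_wpM2l // sqr_ge0.
  have : s0 ^+ 2 * nz * nc <= nc * nc by rewrite ler_wpM2r.
  rewrite expr2; nra.
have hu : zeta * nu <= ng + kH * nv.
  apply: cancel_sq => //; first by rewrite addr_ge0 // mulr_ge0 // ltW.
    exact: ltW.
  apply: le_trans (hHc _ hJu) _.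
  have e : H *m u = H *m d - H *m v by rewrite /u mulmxBr.
  have e2 : dotv u (J^T *m y) = 0 by rewrite dotvC dotv_tr hJu dotvC dotv0l.
  rewrite e dotvBr hHd dotvBr e2 subr0.
  have h1 : dotv u (- g) <= nu * ng by rewrite dotvNr -dotvNl; apply: le_trans (CS _ _) _; rewrite norm2N.
  have h2 : - dotv u (H *m v) <= nu * (kH * nv).
    rewrite -dotvNl; apply: le_trans (CS _ _) _; rewrite norm2N.
    by apply: ler_wpM2l.
  rewrite mulrDr; lra.
have hJy : nJy <= ng + kH * nu + kH * nv.
  rewrite -[nJy]mul1r; apply: (@cancel_sq _ _ 1) => //; first by rewrite !addr_ge0 // mulr_ge0 // ltW.
  rewrite mul1r /nJy sq.
  have e : J^T *m y = - g - H *m u - H *m v.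
    by rewrite -addrA -opprD -mulmxDr -hdu hHd opprB addrCA subrr addr0.
  rewrite {2}e !dotvBr.
  have h1 : dotv (J^T *m y) (- g) <= nJy * ng by apply: le_trans (CS _ _) _; rewrite norm2N.
  have h2 : - dotv (J^T *m y) (H *m u) <= nJy * (kH * nu).
    rewrite -dotvNr; apply: le_trans (CS _ _) _; rewrite norm2N.
    by apply: ler_wpM2l.
  have h3 : - dotv (J^T *m y) (H *m v) <= nJy * (kH * nv).
    rewrite -dotvNr; apply: le_trans (CS _ _) _; rewrite norm2N.
    by apply: ler_wpM2l.
  rewrite dotvNr in h1; rewrite dotvNr -/nJy !mulrDr; lra.
have hy : s0 * ny <= nJy.
  apply: sq_le => //; first by rewrite mulr_ge0 // ltW.
  by rewrite exprMn !sq; exact: sv_col.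
have hq : dotv g d = - dotv d (H *m d) + dotv y c.
  rewrite {1}hgd dotvNl dotvDl dotv_tr hl2 dotvNr dotvC; lra.
have hdH : zeta * nu ^+ 2 - 2 * kH * nu * nv - kH * nv ^+ 2 <= dotv d (H *m d).
  have qe : forall a b : 'cV[R]_n, dotv (a + b) (H *m (a + b)) =
     dotv a (H *m a) + dotv a (H *m b) + dotv b (H *m a) + dotv b (H *m b).
    by move=> a b; rewrite mulmxDr !dotvDl !dotvDr; ring.
  rewrite (_ : dotv d (H *m d) = dotv (u + v) (H *m (u + v))); last by rewrite -hdu.
  rewrite qe.
  have h0 := hHc _ hJu.
  have h1 : - dotv u (H *m v) <= nu * (kH * nv).
    rewrite -dotvNl; apply: le_trans (CS _ _) _; rewrite norm2N.
    by apply: ler_wpM2l.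
  have h2 : - dotv v (H *m u) <= nv * (kH * nu).
    rewrite -dotvNl; apply: le_trans (CS _ _) _; rewrite norm2N.
    by apply: ler_wpM2l.
  have h3 : - dotv v (H *m v) <= nv * (kH * nv).
    rewrite -dotvNl; apply: le_trans (CS _ _) _; rewrite norm2N.
    by apply: ler_wpM2l.
  rewrite -/nu in h0; nra.
have hyc : dotv y c <= ny * nc by exact: CS.
set Bv := Bc / s0.
have hvB : nv <= Bv.
  by rewrite /Bv ler_pdivlMr // mulrC; exact: le_trans hv hc.
have hvc : nv <= nc / s0 by rewrite ler_pdivlMr // mulrC.
set Bu := (Bg + kH * Bv) / zeta.
have huB : nu <= Bu.
  rewrite /Bu ler_pdivlMr // mulrC.
  apply: le_trans hu _; apply: lerD; [exact: hg | apply: ler_wpM2l => //; exact: ltW].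
set M := Bg + kH * Bu + kH * Bv.
have hyB : ny <= M / s0.
  rewrite ler_pdivlMr // mulrC; apply: le_trans hy _; apply: le_trans hJy _.
  rewrite /M; apply: lerD; first apply: lerD; first exact: hg.
  - by apply: ler_wpM2l => //; exact: ltW.
  - by apply: ler_wpM2l => //; exact: ltW.
have hyc2 : dotv y c <= M / s0 * nc.
  by apply: le_trans hyc _; apply: ler_wpM2r.
have hmdH : - dotv d (H *m d) <= (kH ^+ 2 / zeta + kH) * nv ^+ 2.
  have : zeta * (2 * kH * nu * nv - zeta * nu ^+ 2) <= kH ^+ 2 * nv ^+ 2.
    have := sqr_ge0 (zeta * nu - kH * nv); nra.
  rewrite mulrC -ler_pdivlMr // => hh.
  rewrite mulrDl [X in _ <= _ + X]mulrC.
  have -> : kH ^+ 2 / zeta * nv ^+ 2 = kH ^+ 2 * nv ^+ 2 / zeta by rewrite mulrAC.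
  lra.
have hv2 : nv ^+ 2 <= Bc / s0 ^+ 2 * nc.
  have -> : Bc / s0 ^+ 2 * nc = Bv * (nc / s0).
    by rewrite /Bv expr2 invfM; field; apply/eqP; lra.
  rewrite expr2; apply: ler_pM => //.
have hK0 : 0 <= kH ^+ 2 / zeta + kH.
  by apply: addr_ge0; [apply: divr_ge0; [exact: sqr_ge0 | exact: ltW] | exact: ltW].
have hmdH2 : - dotv d (H *m d) <= (kH ^+ 2 / zeta + kH) * (Bc / s0 ^+ 2) * nc.
  by apply: le_trans hmdH _; rewrite -mulrA; apply: ler_wpM2l.
have hpos : 0 <= (kH ^+ 2 / zeta + kH) * (Bc / s0 ^+ 2) * nc.
  have hBc : 0 <= Bc by exact: le_trans hnc hc.
  by rewrite !mulr_ge0 // ?invr_ge0 // sqr_ge0.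
rewrite hq mulrDl.
case: (leP (dotv d (H *m d)) 0) => hd.
  lra.
lra.
Qed.

End S3.

Section S4.
Variable R : realType.

Lemma bern (h : R) N : 0 <= h -> 1 + N%:R * h <= (1 + h) ^+ N.
Proof.
move=> hh; elim: N => [|N IH]; first by rewrite mul0r addr0 expr0.
rewrite exprS -addn1 natrD mulrDl mul1r.
have : 0 <= N%:R * h by rewrite mulr_ge0.
have : 0 <= (1 + h) by lra.
nra.
Qed.

Lemma geom_small (r t0 lo : R) : 0 < r < 1 -> 0 < lo -> 0 <= t0 ->
  exists N : nat, t0 * r ^+ N < lo.
Proof.
move=> /andP[r0 r1] hlo ht0.
set h := r^-1 - 1.
have hh : 0 < h by rewrite /h subr_gt0 invf_gt1.
set N := Num.bound (t0 / (lo * h)).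
have hN : t0 / (lo * h) < N%:R by apply: archi_boundP; rewrite divr_ge0 // mulr_ge0 // ltW.
exists N.
have hq := bern N (ltW hh).
have e : 1 + h = r^-1 by rewrite /h addrC subrK.
rewrite e exprVn in hq.
have rN : 0 < r ^+ N by rewrite exprn_gt0.
have h1 : t0 < lo * (N%:R * h).
  have -> : lo * (N%:R * h) = N%:R * (lo * h) by ring.
  by rewrite -ltr_pdivrMr // mulr_gt0.
have h2 : lo * (N%:R * h) < lo * (r ^+ N)^-1.
  rewrite ltr_pM2l //; apply: lt_le_trans hq; lra.
have h3 : t0 < lo * (r ^+ N)^-1 by lra.
rewrite -ltr_pdivlMr // ; by rewrite mulrC.
Qed.

Lemma eventually_const (t : nat -> R) r lo : 0 < r < 1 -> 0 < lo ->
  (forall k, lo <= t k) -> (forall k, t k.+1 = t k \/ t k.+1 <= r * t k) ->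
  exists k0, forall k, (k0 <= k)%N -> t k = t k0.
Proof.
move=> /andP[r0 r1] hlo ht hs.
have tpos : forall k, 0 < t k by move=> k; exact: lt_le_trans hlo (ht k).
have reach : forall k0 k, (k0 <= k)%N -> t k = t k0 \/ t k <= r * t k0.
  move=> k0; elim=> [|k IH]; first by rewrite leqn0 => /eqP ->; left.
  rewrite leq_eqVlt => /orP [/eqP <- | ]; first by left.
  rewrite ltnS => /IH [e|le].
    by case: (hs k) => h; [left; rewrite h e | right; rewrite -e].
  right; case: (hs k) => h; first by rewrite h.
  apply: le_trans h _; have := tpos k; nra.
have P : forall N k0, t k0 * r ^+ N < lo -> exists k1, forall k, (k1 <= k)%N -> t k = t k1.
  elim=> [|N IH] k0.
    by rewrite expr0 mulr1 => h; have := ht k0; lra.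
  move=> h.
  case: (pselect (forall k, (k0 <= k)%N -> t k = t k0)) => [H|H]; first by exists k0.
  have [k [hk ne]] : exists k, (k0 <= k)%N /\ t k <> t k0.
    apply: contra_notP H => hn k hk; apply: contra_notP hn => hn; by exists k.
  case: (reach _ _ hk) => // hle.
  apply: (IH k); apply: le_lt_trans h.
  rewrite exprS mulrA [t k0 * r]mulrC; apply: ler_wpM2r; last exact: hle.
  by rewrite exprn_ge0 // ltW.
have [N hN] : exists N : nat, t 0 * r ^+ N < lo.
  by apply: geom_small => //; [rewrite r0 r1 | exact: ltW].
exact: P hN.
Qed.

End S4.

Lemma tu_props (R : realType) (eps sigma taup q c1 Kp : R) :
  0 < eps < 1 -> 0 < sigma < 1 -> 0 < Kp -> q <= Kp * c1 -> 0 < taup ->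
  (tau_update eps sigma taup q c1 = taup \/
     tau_update eps sigma taup q c1 <= (1 - eps) * taup) /\
  Num.min taup ((1 - eps) * (1 - sigma) / Kp) <= tau_update eps sigma taup q c1.
Proof.
move=> /andP[e0 e1] /andP[s0 s1] hK hq ht.
rewrite /tau_update; case: ifP => hq0.
  by split; [left | rewrite ge_min lexx].
case: ifP => htr.
  by split; [left | rewrite ge_min lexx].
move/negbT: hq0; rewrite -ltNge => hq0.
move/negbT: htr; rewrite -ltNge => htr.
split.
  by right; apply: ler_wpM2l; [lra | exact: ltW].
rewrite ge_min; apply/orP; right.
rewrite -mulrA; apply: ler_wpM2l; first lra.
have hh : (1 - sigma) / Kp * q <= (1 - sigma) / Kp * (Kp * c1).
  by apply: ler_wpM2l => //; apply: divr_ge0; [lra | exact: ltW].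
have e : (1 - sigma) / Kp * (Kp * c1) = (1 - sigma) * c1.
  by field; exact: lt0r_neq0.
by rewrite ler_pdivlMr // -e.
Qed.

Unset Implicit Arguments. Set Strict Implicit.

Theorem lemma2p16 (R : realType) (n m : nat)
  (X : set 'cV[R]_n) (f : 'cV[R]_n -> R) (gf : 'cV[R]_n -> 'cV[R]_n)
  (c : 'cV[R]_n -> 'cV[R]_m) (Jc : 'cV[R]_n -> 'M[R]_(m, n))
  (Lf : R) (gam : 'I_m -> R) (kH zeta : R)
  (tau_m1 eps sigma eta : R)
  (x : nat -> 'cV[R]_n) (H : nat -> 'M[R]_n) (d : nat -> 'cV[R]_n)
  (y : nat -> 'cV[R]_m) (tau alpha : nat -> R)
  (* Standing Assumption *)
  (hXo : open X) (hXc : convex_set_cV X)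
  (hfd : forall u, X u -> differentiable f u /\
           ('d f u : 'cV[R]_n -> R) = (fun v => dotv (gf u) v))
  (hgfc : {in X, continuous gf})
  (hfb : exists fl, forall u, X u -> fl <= f u)
  (hgb : exists B, forall u, X u -> norm2 (gf u) <= B)
  (hgL : forall u v, X u -> X v -> norm2 (gf u - gf v) <= Lf * norm2 (u - v))
  (hcd : forall (i : 'I_m) u, X u ->
           differentiable (fun w => c w i 0) u /\
           ('d (fun w => c w i 0) u : 'cV[R]_n -> R) =
             (fun v => dotv (rowv (Jc u) i) v))
  (hcb : exists B, forall u, X u -> norm2 (c u) <= B)
  (hJb : exists B, forall u, X u -> forall i j, `|Jc u i j| <= B)
  (hJL : forall (i : 'I_m) u v, X u -> X v ->
           norm2 (rowv (Jc u) i - rowv (Jc v) i) <= gam i * norm2 (u - v))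
  (hsv : exists smin, 0 < smin /\
           forall u, X u -> forall s, singular_value (Jc u) s -> smin <= s)
  (* Matrix Assumption *)
  (hkH : 0 < kH) (hzeta : 0 < zeta)
  (hHsym : forall k, (H k)^T = H k)
  (hHn : forall k, spec_norm_le (H k) kH)
  (hHc : forall k (u : 'cV[R]_n), Jc (x k) *m u = 0 ->
           zeta * norm2 u ^+ 2 <= dotv u (H k *m u))
  (* parameters *)
  (htau0 : 0 < tau_m1) (heps : 0 < eps < 1) (hsigma : 0 < sigma < 1)
  (heta : 0 < eta < 1)
  (* common iteration *)
  (hxX : forall k, X (x k))
  (hlin1 : forall k, H k *m d k + (Jc (x k))^T *m y k = - gf (x k))
  (hlin2 : forall k, Jc (x k) *m d k = - c (x k))
  (hnoterm : forall k, ~ (gf (x k) + (Jc (x k))^T *m y k = 0 /\ c (x k) = 0))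
  (htau : forall k, tau k =
           tau_update eps sigma (if k is k'.+1 then tau k' else tau_m1)
             (dotv (gf (x k)) (d k) + Num.max (dotv (d k) (H k *m d k)) 0)
             (norm1 (c (x k))))
  (hx : forall k, x k.+1 = x k + alpha k *: d k)
  (* step sizes: Algorithm 1 or Algorithm 2 *)
  (halg : (exists rho Lm1 gm1,
             alg1_stepsizes X f gf c Jc eta rho Lm1 gm1 x H d tau alpha) \/
          (exists nu abar,
             alg2_stepsizes X f gf c eta nu abar x H d tau alpha)) :
  exists (ktau : nat) (tau_min : R), 0 < tau_min /\
    forall k, (ktau <= k)%N -> tau k = tau_min.

Proof.
have [smin [hs0 hsvb]] := hsv.
have [Bg hBg] := hgb.
have [Bc hBc] := hcb.
set K := ((Bg + kH * ((Bg + kH * (Bc / smin)) / zeta) + kH * (Bc / smin)) / smin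
     + (kH ^+ 2 / zeta + kH) * (Bc / smin ^+ 2)).
set Kp := Num.max K 0 + 1.
have hKp0 : 0 <= Num.max K 0 by rewrite le_max lexx orbT.
have hKp : 0 < Kp by rewrite /Kp; lra.
have hKK : K <= Kp.
  have : K <= Num.max K 0 by rewrite le_max lexx.
  rewrite /Kp; lra.
have hq : forall k, dotv (gf (x k)) (d k) + Num.max (dotv (d k) (H k *m d k)) 0
    <= Kp * norm1 (c (x k)).
  move=> k.
  have h := q_bound hs0 hkH hzeta (hsvb _ (hxX k)) (hHn k) (hHc k)
    (hBg _ (hxX k)) (hBc _ (hxX k)) (hlin1 k) (hlin2 k).
  apply: le_trans h _.
  apply: le_trans (_ : Kp * norm2 (c (x k)) <= _).
    by apply: ler_wpM2r => //; exact: norm2_ge0.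
  by apply: ler_wpM2l; [exact: ltW | exact: norm2_le1].
set C := (1 - eps) * (1 - sigma) / Kp.
set lo := Num.min tau_m1 C.
have hC : 0 < C.
  case/andP: heps => e0 e1; case/andP: hsigma => s0 s1.
  by rewrite /C divr_gt0 // mulr_gt0 // subr_gt0.
have hlo : 0 < lo by rewrite /lo lt_min htau0 hC.
have loC : lo <= C by rewrite /lo ge_min lexx orbT.
have lob : forall k, lo <= tau k.
  elim=> [|k IH].
    rewrite htau; have [_ h] := tu_props heps hsigma hKp (hq 0%N) htau0.
    exact: h.
  rewrite htau.
  have [_ h] := tu_props heps hsigma hKp (hq k.+1) (lt_le_trans hlo IH).
  apply: le_trans h; rewrite le_min IH /=; exact: loC.
have step : forall k, tau k.+1 = tau k \/ tau k.+1 <= (1 - eps) * tau k.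
  move=> k; rewrite htau.
  by have [h _] := tu_props heps hsigma hKp (hq k.+1) (lt_le_trans hlo (lob k)).
have hr : 0 < 1 - eps < 1.
  case/andP: heps => e0 e1; apply/andP; split; lra.
have [k0 hk0] := eventually_const hr hlo lob step.
exists k0, (tau k0); split; last exact: hk0.
exact: lt_le_trans hlo (lob k0).
Qed.
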